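(* Let $A$ and $B$ be positive definite $d\times d$ matrices, $\lambda\in(0,1)$, and denote $(A,B)_\lambda=\lambda A+(1-\lambda)B$ and $(A^2,B^2)_\lambda=\lambda A^2+(1-\lambda)B^2$. Then $$\mathrm{Tr}\left(\sqrt{(A^2,B^2)_\lambda}-(A,B)_\lambda\right)=\lambda(1-\lambda)\,\mathrm{Tr}\left((A-B)^2\left(\sqrt{(A^2,B^2)_\lambda}+(A,B)_\lambda\right)^{-1}\right).$$
   Context: $\sqrt{\cdot}$ denotes the positive semidefinite square root of a positive definite matrix. *)

(* Defs.v *)
From HB Require Import structures.
From mathcomp Require Import all_boot all_order all_algebra.
Set Implicit Arguments. Unset Strict Implicit. Unset Printing Implicit Defensive.
Import Order.TTheory GRing.Theory Num.Theory.
Local Open Scope ring_scope.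

Definition hermmx (C : numClosedFieldType) (d : nat) (M : 'M[C]_d) : Prop :=
  (map_mx Num.conj_op M)^T = M.

Definition posdefmx (C : numClosedFieldType) (d : nat) (M : 'M[C]_d) : Prop :=
  hermmx M /\ forall v : 'rV[C]_d, v != 0 ->
    0 < (v *m M *m (map_mx Num.conj_op v)^T) 0 0.

Definition psdmx (C : numClosedFieldType) (d : nat) (M : 'M[C]_d) : Prop :=
  hermmx M /\ forall v : 'rV[C]_d, 0 <= (v *m M *m (map_mx Num.conj_op v)^T) 0 0.

Definition is_psd_sqrt (C : numClosedFieldType) (d : nat) (S M : 'M[C]_d) : Prop :=
  psdmx S /\ S *m S = M.

(* Main.v *)
Require Import Defs.
From HB Require Import structures.
From mathcomp Require Import all_boot all_order all_algebra.
From mathcomp Require Import ring.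
Import Order.TTheory GRing.Theory Num.Theory.
Local Open Scope ring_scope.

Theorem lemma2p1 (C : numClosedFieldType) (d : nat) (A B : 'M[C]_d) (l : C)
  (hA : posdefmx A) (hB : posdefmx B) (hl0 : 0 < l) (hl1 : l < 1)
  (S : 'M[C]_d)
  (hS : is_psd_sqrt S (l *: (A *m A) + (1 - l) *: (B *m B))) :
  \tr (S - (l *: A + (1 - l) *: B)) =
  l * (1 - l) *
    \tr (((A - B) *m (A - B)) *m invmx (S + (l *: A + (1 - l) *: B))).
Proof.
set m := 1 - l.
set M := l *: A + m *: B.
have hm0 : 0 < m by rewrite /m subr_gt0.
have [[_ hSp] hSS] := hS.
have hY : S + M \in unitmx.
  rewrite unitmxE unitfE; apply/negP => /det0P [v vn0 hv].
  have := hSp v.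
  have : v *m (S + M) *m (map_mx Num.conj_op v)^T = 0 by rewrite hv mul0mx.
  rewrite /M !mulmxDr !mulmxDl -!scalemxAr -!scalemxAl.
  have h1 := hA.2 v vn0.
  have h2 := hB.2 v vn0.
  set w := (map_mx _ v)^T in h1 h2 *.
  set a' := v *m S *m w.
  set b' := v *m A *m w in h1 *.
  set c' := v *m B *m w in h2 *.
  clearbody a' b' c'.
  move=> E0 hS0; have E := congr1 (fun N : 'M[C]_1 => N 0 0) E0; rewrite /= !mxE in E.
  set a := a' 0 0 in E hS0.
  set b := b' 0 0 in E h1.
  set c := c' 0 0 in E h2.
  move: E.
  suff H : 0 < a + (l * b + m * c) by move=> E; move: H; rewrite E ltxx.
  apply: ltr_wpDl => //; apply: ltr_wpDr; first by apply/ltW/mulr_gt0.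
  exact: mulr_gt0.
set Y := S + M.
set X := invmx Y.
have hXY : X *m Y = 1%:M by rewrite mulVmx.
have hYX : Y *m X = 1%:M by rewrite mulmxV.
have e1 : A - M = m *: (A - B).
  by apply/matrixP => i j; rewrite /M /m !mxE; ring.
have e2 : B - M = l *: (B - A).
  by apply/matrixP => i j; rewrite /M /m !mxE; ring.
have key : (l * m) *: ((A - B) *m (A - B)) = S *m S - M *m M.
  have hMM : M *m M = l *: (A *m M) + m *: (B *m M) by rewrite {1}/M mulmxDl -!scalemxAl.
  rewrite hSS hMM.
  have -> : l *: (A *m A) + m *: (B *m B) - (l *: (A *m M) + m *: (B *m M))
     = l *: (A *m (A - M)) + m *: (B *m (B - M)).
    by rewrite !mulmxBr !scalerBr opprD addrACA.
  rewrite e1 e2 -!scalemxAr !scalerA -(opprB A B) mulmxN scalerN [m * l]mulrC.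
  by rewrite -scalerBr -mulmxBl.
rewrite -mxtraceZ scalemxAl key mulmxBl !raddfB /=.
have tS : \tr S = \tr (S *m S *m X) + \tr (S *m M *m X).
  by rewrite -mxtraceD -mulmxDl -mulmxDr -mulmxA hYX mulmx1.
have tM : \tr M = \tr (M *m S *m X) + \tr (M *m M *m X).
  by rewrite -mxtraceD -mulmxDl -mulmxDr -mulmxA hYX mulmx1.
have tY : \tr S = \tr (S *m S *m X) + \tr (M *m S *m X).
  rewrite -mxtraceD -mulmxDl -mulmxDl -/Y -mulmxA mxtrace_mulC -mulmxA hXY.
  by rewrite mulmx1.
rewrite tM.
have -> : \tr (M *m S *m X) = \tr (S *m M *m X).
  by apply: (addrI (\tr (S *m S *m X))); rewrite -tS -tY.
rewrite {1}tS; ring.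
Qed.
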